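(* Let $\rho\in\mathcal{L}_{0}$ be positive, let $\delta\in(0,\alpha]$ and let $\{w_{j}\}$ be a $(\rho,\delta)$-lattice on $\mathbb{D}$. For any $\xi\in\mathbb{D}$ and $k\in\mathbb{N}^{+}$, the set $$D_{k}(\xi)=\{z\in\mathbb{D}:|\xi-z|<2^{k}\delta\min(\rho(\xi),\rho(z))\}$$ contains at most $K$ points of the lattice $\{w_{j}\}$, where $K$ depends on $k$ but not on $\xi$.
   Context: $\mathbb{D}$ is the open unit disc. $C_0$ is the set of continuous $\rho$ on $\mathbb{D}$ with $\rho(z)\to0$ as $|z|\to1$. $\mathcal{L}$ is the set of real $\rho\in C_0$ with $\sup_{z\ne w}|\rho(z)-\rho(w)|/|z-w|<\infty$; $\mathcal{L}_0$ is the set of $\rho\in\mathcal{L}$ such that for every $\varepsilon>0$ there is a compact $E\subset\mathbb{D}$ with $|\rho(z)-\rho(w)|\le\varepsilon|z-w|$ for $z,w\in\mathbb{D}\setminus E$. $D^r(z)=D(z,r\rho(z))$ (Euclidean disc). There are constants $\alpha>0$, $s>0$ depending only on $\rho$ (with $\alpha$ fixed) such that for $0<r\le\alpha$ a $(\rho,r)$-lattice exists, where a $(\rho,r)$-lattice is a sequence $\{w_k\}\subset\mathbb{D}$ with $\mathbb{D}=\bigcup_kD^r(w_k)$, the discs $D^{sr}(w_k)$ pairwise disjoint, and $\{D^{2\alpha}(w_k)\}$ a covering of $\mathbb{D}$ of finite multiplicity. *)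

(* Defs.v *)
(* R : realType, the complex plane modelled as R * R
   with the Euclidean distance and the product topology. *)
From HB Require Import structures.
From mathcomp Require Import all_boot all_order all_algebra.
From mathcomp Require Import all_classical all_reals topology normedtype.
Set Implicit Arguments. Unset Strict Implicit. Unset Printing Implicit Defensive.
Import Order.TTheory GRing.Theory Num.Theory numFieldNormedType.Exports.
Local Open Scope ring_scope.
Local Open Scope classical_set_scope.

Section Defs.
Variable R : realType.
Local Notation P := (R * R)%type.

Definition edist (z w : P) : R :=
  Num.sqrt ((z.1 - w.1) ^+ 2 + (z.2 - w.2) ^+ 2).

Definition cmod (z : P) : R := edist z (0, 0).

Definition udisc : set P := [set z | cmod z < 1].

Definition edisc (c : P) (r : R) : set P := [set z | edist z c < r].

Definition inC0 (rho : P -> R) : Prop :=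
  {within udisc, continuous rho} /\
  (forall e : R, 0 < e -> exists r : R, r < 1 /\
     forall z : P, r < cmod z -> cmod z < 1 -> `|rho z| < e).

Definition inL (rho : P -> R) : Prop :=
  inC0 rho /\
  exists L : R, forall z w : P, udisc z -> udisc w -> z != w ->
    `|rho z - rho w| <= L * edist z w.

Definition inL0 (rho : P -> R) : Prop :=
  inL rho /\
  forall e : R, 0 < e -> exists E : set P, compact E /\ E `<=` udisc /\
    forall z w : P, (udisc `\` E) z -> (udisc `\` E) w ->
      `|rho z - rho w| <= e * edist z w.

Definition Dr (rho : P -> R) (r : R) (z : P) : set P := edisc z (r * rho z).

Definition is_lattice (rho : P -> R) (alpha s r : R) (w : nat -> P) : Prop :=
  (forall k, udisc (w k)) /\
  (forall z, udisc z -> exists k, Dr rho r (w k) z) /\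
  (forall k l, k <> l -> forall z, Dr rho (s * r) (w k) z -> ~ Dr rho (s * r) (w l) z) /\
  (forall z, udisc z -> exists k, Dr rho (2 * alpha) (w k) z) /\
  (exists N : nat, forall z, udisc z -> forall S : seq nat, uniq S ->
     (forall k, k \in S -> Dr rho (2 * alpha) (w k) z) -> (size S <= N)%N).

Definition Dk (rho : P -> R) (delta : R) (k : nat) (xi : P) : set P :=
  [set z | udisc z /\ edist xi z < 2 ^+ k * delta * Num.min (rho xi) (rho z)].

End Defs.

(* Main.v *)
Require Import Defs.
From HB Require Import structures.
From mathcomp Require Import all_boot all_order all_algebra.
From mathcomp Require Import all_classical all_reals topology normedtype.
From mathcomp Require Import ring lra.
Import Order.TTheory GRing.Theory Num.Theory numFieldNormedType.Exports.
Local Open Scope ring_scope.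
Local Open Scope classical_set_scope.

Lemma count_cells (n : nat) (S : seq nat) (f : nat -> nat * nat) :
  uniq S -> {in S &, injective f} ->
  (forall j, j \in S -> ((f j).1 < n)%N /\ ((f j).2 < n)%N) -> (size S <= n * n)%N.
Proof.
move=> uS inj hb.
have -> : (n * n)%N = size [seq (x, y) | x <- iota 0 n, y <- iota 0 n] by rewrite size_allpairs size_iota.
rewrite -(size_map f).
apply: uniq_leq_size; first by rewrite map_inj_in_uniq.
move=> p /mapP [j jS ->]; have [h1 h2] := hb j jS.
by case: (f j) h1 h2 => a b /= h1 h2; apply: allpairs_f; rewrite mem_iota.
Qed.

Lemma coord1_le (R : realType) (a b : R * R) : `|a.1 - b.1| <= Defs.edist a b.
Proof.
rewrite /Defs.edist -sqrtr_sqr ler_sqrt; last by rewrite addr_ge0 ?sqr_ge0.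
by rewrite lerDl sqr_ge0.
Qed.

Lemma coord2_le (R : realType) (a b : R * R) : `|a.2 - b.2| <= Defs.edist a b.
Proof.
rewrite /Defs.edist -sqrtr_sqr ler_sqrt; last by rewrite addr_ge0 ?sqr_ge0.
by rewrite lerDr sqr_ge0.
Qed.

Lemma edist_lt (R : realType) (a b : R * R) (h : R) : 0 < h ->
  `|a.1 - b.1| < h -> `|a.2 - b.2| < h -> Defs.edist a b < 2 * h.
Proof.
move=> h0 h1 h2; rewrite /Defs.edist -[2 * h]ger0_norm ?mulr_ge0 ?ltW //.
rewrite -sqrtr_sqr ltr_sqrt; last by rewrite exprn_gt0 // mulr_gt0.
move: h1 h2; rewrite !ltr_norml => /andP[h1 h1'] /andP[h2 h2'].
nra.
Qed.

Lemma edist_sym (R : realType) (a b : R * R) : Defs.edist a b = Defs.edist b a.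
Proof. by rewrite /Defs.edist -(sqrrN (a.1 - b.1)) -(sqrrN (a.2 - b.2)) !opprB. Qed.

Lemma edist_self (R : realType) (a : R * R) : Defs.edist a a = 0.
Proof. by rewrite /Defs.edist !subrr expr0n /= addr0 sqrtr0. Qed.

Lemma same_cell (R : realType) (a b h : R) : 0 < h -> 0 <= a / h -> 0 <= b / h ->
  Num.truncn (a / h) = Num.truncn (b / h) -> `|a - b| < h.
Proof.
move=> h0 ha hb e.
have := truncn_itv ha; have := truncn_itv hb; rewrite -e.
set t := (Num.truncn (a / h))%:R; rewrite -natr1 -/t.
move=> /andP[b1 b2] /andP[a1 a2].
have -> : a - b = (a / h - b / h) * h by rewrite mulrBl !divfK // gt_eqF.
rewrite normrM (gtr0_norm h0) -ltr_pdivlMr // divff ?gt_eqF //.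
rewrite ltr_norml; apply/andP; split; lra.
Qed.

Lemma cell_bound (R : realType) (X h T : R) : 0 < h -> 0 <= X -> X < T * h ->
  (Num.truncn (X / h) < (Num.truncn T).+1)%N.
Proof.
move=> h0 X0 XT.
have T0 : 0 <= T by rewrite -(pmulr_rge0 _ h0) mulrC; apply: le_trans X0 (ltW XT).
have Xh0 : 0 <= X / h by rewrite divr_ge0 // ltW.
have := truncn_itv Xh0; have := truncn_itv T0.
move=> /andP[_ t2] /andP[x1 _].
rewrite -(ltr_nat R); apply: le_lt_trans x1 _; apply: lt_trans t2.
by rewrite ltr_pdivrMr.
Qed.

Theorem lemma5p5 (R : realType) (rho : R * R -> R) (alpha s : R)
  (hrho : inL0 rho) (hpos : forall z, udisc z -> 0 < rho z)
  (halpha : 0 < alpha) (hs : 0 < s)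
  (hex : forall r : R, 0 < r -> r <= alpha -> exists w, is_lattice rho alpha s r w)
  (delta : R) (hdelta : 0 < delta) (hdelta' : delta <= alpha)
  (w : nat -> R * R) (hw : is_lattice rho alpha s delta w) :
  forall k : nat, (0 < k)%N ->
    exists K : nat, forall xi : R * R, udisc xi ->
      forall S : seq nat, uniq S -> (forall j, j \in S -> Dk rho delta k xi (w j)) ->
        (size S <= K)%N.
Proof.
move: hrho => [[_ [L hL]] _].
move: hw => [hwu [_ [hdisj _]]].
have ed0 : forall a b : R * R, 0 <= Defs.edist a b by move=> a b; exact: sqrtr_ge0.
set L0 := `|L|.
have L00 : 0 <= L0 by exact: normr_ge0.
have lip : forall z v, udisc z -> udisc v -> rho z <= rho v + L0 * Defs.edist z v.
  move=> z v hz hv; have [->|nzv] := eqVneq z v.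
    by rewrite edist_self mulr0 addr0.
  have := hL z v hz hv nzv => h1.
  have h2 : L * Defs.edist z v <= L0 * Defs.edist z v by rewrite ler_wpM2r // ler_norm.
  have h3 : rho z - rho v <= `|rho z - rho v| by exact: ler_norm.
  lra.
move=> k _.
set c := 2 ^+ k * delta.
have c0 : 0 < c by rewrite mulr_gt0 // exprn_gt0.
set C := 1 + L0 * c.
have C0 : 0 < C by rewrite /C; have := mulr_ge0 L00 (ltW c0); lra.
set T := 4 * 2 ^+ k * C / s.
exists ((Num.truncn T).+1 * (Num.truncn T).+1)%N.
move=> xi hxi S uS hS.
have rx0 := hpos xi hxi.
set M := c * rho xi.
set h := s * delta * rho xi / C / 2.
have h0 : 0 < h by rewrite /h !divr_gt0 // !mulr_gt0.
have Th : T * h = 2 * M.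
  rewrite /T /h /M /c; field; rewrite ?gt_eqF //.
have hj : forall j, j \in S -> [/\ udisc (w j), `|xi.1 - (w j).1| < M,
    `|xi.2 - (w j).2| < M & rho xi <= C * rho (w j)].
  move=> j jS; have [hu hd] := hS j jS.
  have rj0 := hpos _ hu.
  have e1 : Defs.edist xi (w j) < M.
    apply: lt_le_trans hd _; rewrite -/c ler_pM2l //.
    by rewrite ge_min lexx.
  have e2 : Defs.edist xi (w j) <= c * rho (w j).
    apply: ltW; apply: lt_le_trans hd _; rewrite -/c ler_pM2l //.
    by rewrite ge_min lexx orbT.
  split => //.
  - have := coord1_le _ xi (w j). lra.
  - have := coord2_le _ xi (w j). lra.
  - have := lip xi (w j) hxi hu.
    have := ler_wpM2l L00 e2.
    rewrite /C mulrDl mul1r -mulrA; lra.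
apply: (@count_cells _ _ (fun j => (Num.truncn (((w j).1 - xi.1 + M) / h),
                                  Num.truncn (((w j).2 - xi.2 + M) / h)))) => //.
- move=> i j iS jS [e1 e2].
  apply/eqP; apply: contraT => nij.
  have [hui hi1 hi2 _] := hj i iS.
  have [huj hj1 hj2 hCj] := hj j jS.
  have rj0 := hpos _ huj.
  have nn : forall a b : R, `|a - b| < M -> 0 <= (b - a + M) / h.
    move=> a b; rewrite ltr_norml => /andP[p1 p2]; rewrite divr_ge0 ?ltW //; lra.
  have := same_cell _ _ _ _ h0 (nn _ _ hi1) (nn _ _ hj1) e1.
  have := same_cell _ _ _ _ h0 (nn _ _ hi2) (nn _ _ hj2) e2.
  have -> : (w i).2 - xi.2 + M - ((w j).2 - xi.2 + M) = (w i).2 - (w j).2 by ring.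
  have -> : (w i).1 - xi.1 + M - ((w j).1 - xi.1 + M) = (w i).1 - (w j).1 by ring.
  move=> d2 d1.
  have := edist_lt _ _ _ _ h0 d1 d2.
  have hd : 2 * h <= s * delta * rho (w j).
    rewrite /h mulrC divfK ?(gt_eqF (ltr0Sn _ _)) // ler_pdivrMr //.
    by rewrite -[X in _ <= X]mulrA ler_pM2l ?mulr_gt0 // mulrC.
  move=> lt.
  have nij' : i <> j by apply/eqP.
  suff : False by [].
  apply: (hdisj i j nij' (w i)).
    by rewrite /Dr /edisc /= edist_self !mulr_gt0 // hpos.
  by rewrite /Dr /edisc /=; apply: lt_le_trans lt hd.
- move=> j jS; have [_ hj1 hj2 _] := hj j jS.
  move: hj1 hj2; rewrite !ltr_norml => /andP[p1 p2] /andP[q1 q2].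
  split; apply: cell_bound => //; move: Th; lra.
Qed.
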